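(* Let $\mathcal{B}$ be a spherical building of infinite thickness. Then there exists a chamber $C$ of $\mathcal{B}$ such that $\mathrm{Opp}(C)$ contains an apartment of $\mathcal{B}$.
   Context: A spherical building has infinite thickness if every codimension-one simplex (panel) is contained in infinitely many chambers. $\mathrm{Opp}(C)$ is the subcomplex of chambers opposite to $C$ (and their faces); two chambers are opposite if they lie on opposite sides of every wall in an apartment containing both. *)

(* Defs.v *)
(* Buildings are formalized as W-metric buildings
   (Abramenko--Brown, Buildings, Def. 5.1) of type (W,S), with W a finite
   group (spherical case). *)
From mathcomp Require Import all_boot all_fingroup.
Set Implicit Arguments. Unset Strict Implicit. Unset Printing Implicit Defensive.

Local Open Scope group_scope.

Section Coxeter.
Variable gT : finGroupType.

Inductive cox_rel (S : {set gT}) : seq gT -> seq gT -> Prop :=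
| CRinv s : s \in S -> cox_rel S [:: s; s] [::]
| CRbraid s t : s \in S -> t \in S ->
    cox_rel S (flatten (nseq #[s * t] [:: s; t])) [::].

Inductive cox_cong (S : {set gT}) : seq gT -> seq gT -> Prop :=
| CCrefl u : cox_cong S u u
| CCsym u v : cox_cong S u v -> cox_cong S v u
| CCtrans u v w : cox_cong S u v -> cox_cong S v w -> cox_cong S u w
| CCstep u v a b : cox_rel S a b -> cox_cong S (u ++ a ++ v) (u ++ b ++ v).

(* (W,S) is a Coxeter system: S generates W, consists of involutions, and
   W has the presentation <S | s^2 = 1, (st)^m(s,t) = 1>, i.e. any two words
   in S with the same product in W are related by the defining relations. *)
Definition coxeter_system (S : {set gT}) : Prop :=
  [/\ <<S>> = [set: gT],
      (forall s, s \in S -> #[s] = 2) &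
      (forall u v : seq gT, all (mem S) u -> all (mem S) v ->
         \prod_(x <- u) x = \prod_(x <- v) x -> cox_cong S u v)].

Definition has_word (S : {set gT}) (w : gT) (n : nat) : bool :=
  [exists t : n.-tuple gT, all (mem S) t && (\prod_(x <- t) x == w)].

(* Coxeter length l_S(w): the least n with a word of length n
   (reduced words in a finite Coxeter group have length < #|W|). *)
Definition coxlen (S : {set gT}) (w : gT) : nat :=
  find (has_word S w) (iota 0 #|gT|.+1).

End Coxeter.

Section Building.
Variables (gT : finGroupType) (S : {set gT}) (Ch : Type) (delta : Ch -> Ch -> gT).

Definition is_building : Prop :=
  [/\ coxeter_system S,
      inhabited Ch,
      (forall c d, delta c d = 1 <-> c = d),
      (forall c d c' s, s \in S -> delta c' c = s ->
          (delta c' d = s * delta c d \/ delta c' d = delta c d) /\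
          (coxlen S (s * delta c d) = (coxlen S (delta c d)).+1 ->
             delta c' d = s * delta c d)) &
      (forall c d s, s \in S ->
          exists c', delta c' c = s /\ delta c' d = s * delta c d)].

(* A predicate on chambers is infinite: it is not contained in the set of
   entries of any finite list. *)
Definition infinite_pred (P : Ch -> Prop) : Prop :=
  forall l : seq Ch, exists x, P x /\ (forall i, i < size l -> nth x l i <> x)%N.

(* Infinite thickness: every panel (the s-panel of c is the set of d with
   delta c d in {1, s}) contains infinitely many chambers. *)
Definition infinitely_thick : Prop :=
  forall c s, s \in S -> infinite_pred (fun d => delta c d = 1 \/ delta c d = s).

(* c and d are opposite: delta c d is the longest element w0 of W. *)
Definition opposite (c d : Ch) : Prop :=
  forall w : gT, coxlen S w <= coxlen S (delta c d).

(* Apartments: images of isometries W -> Ch, W carrying delta_W(x,y) = x^-1 y. *)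
Definition apartment (A : Ch -> Prop) : Prop :=
  exists alpha : gT -> Ch,
    (forall x y, delta (alpha x) (alpha y) = x^-1 * y) /\
    (forall d, A d <-> exists w, d = alpha w).

End Building.

(* Main.v *)
Require Import Defs.
From mathcomp Require Import all_boot all_fingroup zify.
From Stdlib Require Import ClassicalEpsilon Classical_Prop.
Set Implicit Arguments. Unset Strict Implicit. Unset Printing Implicit Defensive.

Section Words.
Local Open Scope group_scope.
Variable gT : finGroupType.
Variable S : {set gT}.
Hypothesis HS : coxeter_system S.

Definition prodw (a : seq gT) : gT := \prod_(x <- a) x.
Notation L := (coxlen S).
Definition wS (a : seq gT) := all (mem S) a.

Lemma prodw_nil : prodw [::] = 1. Proof. by rewrite /prodw big_nil. Qed.
Lemma prodw_cons x a : prodw (x :: a) = x * prodw a. Proof. by rewrite /prodw big_cons. Qed.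
Lemma prodw_cat a b : prodw (a ++ b) = prodw a * prodw b. Proof. by rewrite /prodw big_cat. Qed.
Lemma prodw_rcons a x : prodw (rcons a x) = prodw a * x.
Proof. by rewrite -cats1 prodw_cat prodw_cons prodw_nil mulg1. Qed.

Lemma S_ord s : s \in S -> #[s] = 2%N.
Proof. by case: HS => _ H _ /H. Qed.
Lemma S_sq s : s \in S -> s * s = 1.
Proof. move=> /S_ord Hs. by rewrite -(expg_order s) Hs expgS expg1. Qed.
Lemma S_inv s : s \in S -> s^-1 = s.
Proof. move=> /S_sq H. by rewrite -[LHS]mulg1 -H mulKg. Qed.
Lemma S_neq1 s : s \in S -> s != 1.
Proof. move=> /S_ord Hs. apply/eqP => E. by move: Hs; rewrite E order1. Qed.

Lemma wS_cons x a : wS (x :: a) = (x \in S) && wS a. Proof. by []. Qed.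
Lemma wS_cat a b : wS (a ++ b) = wS a && wS b. Proof. by rewrite /wS all_cat. Qed.
Lemma wS_rev a : wS (rev a) = wS a. Proof. by rewrite /wS all_rev. Qed.

Lemma prodw_rev a : wS a -> prodw (rev a) = (prodw a)^-1.
Proof.
elim: a => [|x a IH]; first by rewrite prodw_nil invg1.
rewrite wS_cons => /andP [Hx Ha]. by rewrite rev_cons prodw_rcons IH // prodw_cons invMg (S_inv Hx).
Qed.

Lemma word_exists w : exists a, wS a /\ prodw a = w.
Proof.
case: HS => Hgen _ _.
have : w \in <<S>> by rewrite Hgen inE.
case/gen_prodgP => n [c Hc ->].
exists [seq c i | i <- index_enum 'I_n]; split.
  by apply/allP => x /mapP [i _ ->]; apply: Hc.
by rewrite /prodw big_map.
Qed.

Lemma short_word w : exists a, [/\ wS a, prodw a = w & size a <= #|gT|].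
Proof.
have [a [Ha Hw]] := word_exists w.
elim: {a} (size a) {-2}a (leqnn (size a)) Ha Hw => [|n IH] a Hn Ha Hw.
  by exists a; split => //; apply: leq_trans Hn _.
case: (leqP (size a) #|gT|) => Hs; first by exists a.
pose s := [seq prodw (take i a) | i <- iota 0 (size a).+1].
have : ~~ uniq s.
  apply/negP => /card_uniqP Hu.
  have := max_card (mem s). rewrite Hu /s size_map size_iota. move=> H; have := leq_ltn_trans H Hs; by rewrite ltnNge leqnSn.
case/(uniqPn 1) => i [j [Hij Hj Heq]].
move: Hj Heq; rewrite /s size_map size_iota => Hj.
rewrite !(nth_map 0%N) ?size_iota //; last by apply: ltn_trans Hj.
rewrite !nth_iota ?add0n //; last by apply: ltn_trans Hj.
move=> Heq.
apply: (IH (take i a ++ drop j a)).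
- rewrite size_cat size_take size_drop.
  case: ifP => Hi; lia.
- rewrite wS_cat; apply/andP; split.
  + by move: Ha; rewrite -{1}(cat_take_drop i a) wS_cat => /andP[].
  + by move: Ha; rewrite -{1}(cat_take_drop j a) wS_cat => /andP[].
- by rewrite prodw_cat Heq -prodw_cat cat_take_drop.
Qed.

Lemma has_wordP w n :
  reflect (exists a, [/\ wS a, prodw a = w & size a = n]) (has_word S w n).
Proof.
apply: (iffP existsP).
  move=> [t /andP [Ht /eqP Hp]]. exists (val t); split => //. exact: size_tuple.
move=> [a [Ha Hp Hs]]. subst n. exists (in_tuple a). by apply/andP; split => //; apply/eqP.
Qed.

Lemma coxlen_min a : wS a -> L (prodw a) <= size a.
Proof.
move=> Ha.
have key k : k <= #|gT| -> has_word S (prodw a) k -> L (prodw a) <= k.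
  move=> Hk Hw. rewrite leqNgt; apply/negP => Hlt.
  have := before_find 0%N Hlt. by rewrite nth_iota ?add0n // Hw.
have [b [Hb Hbw Hbs]] := short_word (prodw a).
case: (leqP (size a) #|gT|) => Hsa.
  by apply: key => //; apply/has_wordP; exists a.
apply: leq_trans (ltnW Hsa). apply: leq_trans (Hbs).
apply: key => //. apply/has_wordP; exists b; done.
Qed.

Lemma coxlen_spec w : exists a, [/\ wS a, prodw a = w & size a = L w].
Proof.
apply/has_wordP.
have [b [Hb Hbw Hbs]] := short_word w.
have Hh : has (has_word S w) (iota 0 #|gT|.+1).
  apply/hasP; exists (size b); first by rewrite mem_iota.
  by apply/has_wordP; exists b.
have Hf : L w < #|gT|.+1 by rewrite -[X in _ < X](size_iota 0 #|gT|.+1) -has_find.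
have := nth_find 0%N Hh. by rewrite nth_iota.
Qed.


Lemma size_alt (s t : gT) m : size (flatten (nseq m [:: s; t])) = m.*2.
Proof. by elim: m => [|m IH] //=; rewrite IH doubleS. Qed.

Lemma cox_cong_size u v : cox_cong S u v -> odd (size u) = odd (size v).
Proof.
elim => {u v} [u|u v _ IH|u v w _ IH1 _ IH2|u v a b Hr] //.
- by rewrite IH1 IH2.
- case: Hr => [s _|s t _ _]; first by rewrite !size_cat /= !oddD.
  by rewrite !size_cat size_alt /= !oddD odd_double.
Qed.

Lemma L_parity a b : wS a -> wS b -> prodw a = prodw b ->
  odd (size a) = odd (size b).
Proof. case: HS => _ _ H Ha Hb Hab. exact: cox_cong_size (H a b Ha Hb Hab). Qed.

Lemma L_mul x y : L (x * y) <= L x + L y.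
Proof.
have [a [Ha <- <-]] := coxlen_spec x. have [b [Hb <- <-]] := coxlen_spec y.
by rewrite -size_cat -prodw_cat; apply: coxlen_min; rewrite wS_cat Ha Hb.
Qed.

Lemma L_inv x : L x^-1 = L x.
Proof.
have H y : L y^-1 <= L y.
  have [a [Ha <- <-]] := coxlen_spec y.
  by rewrite -prodw_rev // -size_rev; apply: coxlen_min; rewrite wS_rev.
by apply/eqP; rewrite eqn_leq H /= -{1}(invgK x) H.
Qed.

Lemma L1 : L 1 = 0%N.
Proof. by apply/eqP; rewrite -leqn0 -prodw_nil; apply: coxlen_min. Qed.

Lemma L_eq0 w : L w = 0%N -> w = 1.
Proof. have [a [Ha <- Hs]] := coxlen_spec w. rewrite -Hs => /size0nil ->. exact: prodw_nil. Qed.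

Lemma L_s_le s : s \in S -> L s <= 1.
Proof.
move=> Hs. have -> : s = prodw [:: s] by rewrite prodw_cons prodw_nil mulg1.
by apply: coxlen_min; rewrite wS_cons Hs.
Qed.

Lemma L_sw s w : s \in S -> L (s * w) = (L w).+1 \/ L w = (L (s * w)).+1.
Proof.
move=> Hs.
have h1 : L (s * w) <= (L w).+1 by apply: leq_trans (L_mul _ _) _; rewrite -add1n leq_add2r L_s_le.
have h2 : L w <= (L (s * w)).+1.
  rewrite -{1}(mulKg s w) (S_inv Hs).
  by apply: leq_trans (L_mul _ _) _; rewrite -add1n leq_add2r L_s_le.
have [a [Ha Hpa Hsa]] := coxlen_spec w.
have [b [Hb Hpb Hsb]] := coxlen_spec (s * w).
have := @L_parity (s :: a) b. rewrite wS_cons Hs Ha Hb prodw_cons Hpa Hpb /= Hsa Hsb.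
move=> /(_ isT isT erefl) Hp.
have Hne : L (s * w) != L w.
  by apply/eqP => E; move: Hp; rewrite E; case: (odd _).
lia.
Qed.

Lemma L_ws s w : s \in S -> L (w * s) = (L w).+1 \/ L w = (L (w * s)).+1.
Proof.
move=> Hs. rewrite -(L_inv (w * s)) -(L_inv w) invMg (S_inv Hs). exact: L_sw.
Qed.

Lemma desc_exists w : w != 1 -> exists2 s, s \in S & L w = (L (s * w)).+1.
Proof.
move=> Hw. have [a [Ha Hpa Hsa]] := coxlen_spec w.
case: a Ha Hpa Hsa => [|s a] Ha Hpa Hsa; first by move: Hw; rewrite -Hpa prodw_nil eqxx.
move: Ha; rewrite wS_cons => /andP [Hs Ha].
exists s => //.
have Hle : L (s * w) <= size a.
  by rewrite -Hpa prodw_cons mulgA S_sq // mul1g; apply: coxlen_min.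
case: (L_sw w Hs) => // E. move: Hsa => /= Hsa. exfalso. rewrite E -Hsa in Hle. by rewrite ltnNge leqnSn in Hle.
Qed.

Lemma desc_exists_r w : w != 1 -> exists2 s, s \in S & L w = (L (w * s)).+1.
Proof.
move=> Hw. have Hw' : w^-1 != 1 by rewrite eq_invg1.
have [s Hs E] := desc_exists Hw'. exists s => //.
by rewrite -(L_inv (w * s)) invMg (S_inv Hs) -(L_inv w).
Qed.

Definition cj (g h : gT) := g * h * g^-1.
Fixpoint rs (a : seq gT) : seq gT :=
  if a is x :: a' then x :: map (cj x) (rs a') else [::].

Lemma cjM g1 g2 h : cj (g1 * g2) h = cj g1 (cj g2 h).
Proof. by rewrite /cj invMg !mulgA. Qed.

Lemma rs_cat a b : rs (a ++ b) = rs a ++ map (cj (prodw a)) (rs b).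
Proof.
elim: a => [|x a IH] /=.
  by rewrite prodw_nil -[LHS]map_id; apply: eq_map => h; rewrite /cj mul1g invg1 mulg1.
rewrite IH map_cat -map_comp prodw_cons. congr (_ :: _ ++ _). apply: eq_map => h /=. by rewrite cjM.
Qed.

Lemma cjK g h : cj g^-1 (cj g h) = h.
Proof. by rewrite -cjM mulVg /cj mul1g invg1 mulg1. Qed.
Lemma cjKV g h : cj g (cj g^-1 h) = h.
Proof. by rewrite -cjM mulgV /cj mul1g invg1 mulg1. Qed.

Lemma count_cj g t l : count_mem t (map (cj g) l) = count_mem (cj g^-1 t) l.
Proof.
rewrite count_map. apply: eq_count => h /=.
apply/eqP/eqP => [<-|->]; [by rewrite cjK | by rewrite cjKV].
Qed.

Lemma prodw_alt (s t : gT) k : prodw (flatten (nseq k [:: s; t])) = (s * t) ^+ k.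
Proof.
elim: k => [|k IH]; first by rewrite prodw_nil expg0.
by rewrite /= !prodw_cons IH mulgA expgS.
Qed.

Lemma rs_alt (s t : gT) : s^-1 = s -> t^-1 = t -> forall m,
  rs (flatten (nseq m [:: s; t])) = mkseq (fun i => (s * t) ^+ i * s) m.*2.
Proof.
move=> Hs Ht. elim => [|m IH] //.
have -> : flatten (nseq m.+1 [:: s; t]) = [:: s; t] ++ flatten (nseq m [:: s; t]) by [].
rewrite rs_cat IH /= prodw_cons prodw_cons prodw_nil mulg1.
rewrite /mkseq doubleS /=.
have E : iota 2 m.*2 = map (addn 2) (iota 0 m.*2) by rewrite -iotaDl addn0.
rewrite E -map_comp -map_comp /cj Hs expg0 mul1g expg1. congr [:: _, _ & _].
apply: eq_map => i /=. rewrite (_ : 2 + i = i.+2) // invMg Hs Ht [in RHS]expgSr [s * t * (_ * s)]mulgA -expgS. by rewrite !mulgA.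
Qed.

Lemma count_even (g rho s : gT) m : rho ^+ m = 1 ->
  ~~ odd (count_mem g (mkseq (fun i => rho ^+ i * s) m.*2)).
Proof.
move=> Hm. rewrite -addnn /mkseq iotaD add0n.
have E : iota m m = map (addn m) (iota 0 m) by rewrite -iotaDl addn0.
rewrite E map_cat -map_comp.
have -> : [seq ((fun i => rho ^+ i * s) \o addn m) i | i <- iota 0 m] =
          [seq rho ^+ i * s | i <- iota 0 m].
  by apply: eq_map => i /=; rewrite expgD Hm mul1g.
by rewrite count_cat oddD addbb.
Qed.

Lemma rel_inv a b : cox_rel S a b ->
  prodw a = prodw b /\ forall t, odd (count_mem t (rs a)) = odd (count_mem t (rs b)).
Proof.
case => [s Hs|s t Hs Ht].
  split; first by rewrite prodw_cons prodw_cons prodw_nil mulg1 S_sq // prodw_nil.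
  move=> g. rewrite /= /cj mulgK. by case: (s == g).
split; first by rewrite prodw_alt expg_order prodw_nil.
move=> g. rewrite (rs_alt (S_inv Hs) (S_inv Ht)) /=.
by apply/negbTE/count_even/expg_order.
Qed.

Lemma cong_inv u v : cox_cong S u v ->
  prodw u = prodw v /\ forall t, odd (count_mem t (rs u)) = odd (count_mem t (rs v)).
Proof.
elim => {u v} [u|u v _ [IH1 IH2]|u v w _ [IH1 IH2] _ [IH3 IH4]|u v a b Hr].
- by [].
- by split => // t; rewrite IH2.
- by split; [rewrite IH1 IH3 | move=> t; rewrite IH2 IH4].
- have [Hp Hc] := rel_inv Hr.
  split; first by rewrite !prodw_cat Hp.
  move=> t. by rewrite !rs_cat !map_cat !count_cat !count_cj !oddD Hc Hp.
Qed.

Lemma RL a b : wS a -> wS b -> prodw a = prodw b ->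
  forall t, odd (count_mem t (rs a)) = odd (count_mem t (rs b)).
Proof. case: HS => _ _ H Ha Hb Hab. exact: (cong_inv (H a b Ha Hb Hab)).2. Qed.

Lemma del_refl a t : wS a -> t \in rs a ->
  exists a', [/\ wS a', prodw a' = t * prodw a & size a' < size a].
Proof.
elim: a t => [|x a IH] t //. rewrite wS_cons => /andP [Hx Ha] /=.
rewrite inE => /orP [/eqP ->|/mapP [t' Ht' ->]].
  exists a; split => //. by rewrite prodw_cons mulgA S_sq // mul1g.
have [a' [Ha' Hp Hs]] := IH t' Ha Ht'.
exists (x :: a'); split => //; first by rewrite wS_cons Hx.
by rewrite prodw_cons Hp prodw_cons /cj !mulgA mulgKV.
Qed.

Lemma L_del a t : wS a -> t \in rs a -> L (t * prodw a) < size a.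
Proof.
move=> Ha Ht. have [a' [Ha' <- Hs]] := del_refl Ha Ht.
exact: leq_ltn_trans (coxlen_min Ha') Hs.
Qed.

Fixpoint pal (a : seq gT) (s : gT) : seq gT :=
  if a is x :: a' then x :: rcons (pal a' s) x else [:: s].

Lemma pal_wS a s : wS a -> s \in S -> wS (pal a s).
Proof.
elim: a => [|x a IH]; first by move=> _ Hs; rewrite /wS /= Hs.
rewrite wS_cons => /andP [Hx Ha] Hs. change (wS (x :: rcons (pal a s) x)). rewrite wS_cons Hx /=. have := IH Ha Hs. rewrite /wS all_rcons => H; apply/andP; split => //.
Qed.

Lemma pal_size a s : size (pal a s) = (size a).*2.+1.
Proof. by elim: a => [|x a IH] //=; rewrite size_rcons IH doubleS. Qed.

Lemma pal_prod a s : wS a -> prodw (pal a s) = cj (prodw a) s.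
Proof.
elim: a => [|x a IH]; first by rewrite /= prodw_cons !prodw_nil /cj mulg1 mul1g invg1 mulg1.
rewrite wS_cons => /andP [Hx Ha].
change (prodw (x :: rcons (pal a s) x) = cj (prodw (x :: a)) s).
by rewrite prodw_cons prodw_rcons IH // prodw_cons cjM [in RHS]/cj (S_inv Hx) mulgA.
Qed.

Lemma aux_eq1 (x T : gT) : x * x = 1 -> (x == x * (T * x)) = (T == x).
Proof.
move=> Hx. apply/eqP/eqP => [E|->]; last by rewrite Hx mulg1.
have H1 : 1 = T * x by apply: (mulgI x); rewrite mulg1 {1}E.
by rewrite -[T]mulg1 -Hx mulgA -H1 mul1g.
Qed.

Lemma aux_eq2 (x T : gT) : x * x = 1 -> T^-1 = T ->
  (cj x (cj T x) == x * (T * x)) = (T == x).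
Proof.
move=> Hx HT. have Hxi : x^-1 = x by rewrite -[x^-1]mulg1 -Hx mulKg.
rewrite /cj Hxi HT.
apply/eqP/eqP => [E|->]; last by rewrite !mulgA !(Hx, mul1g).
have H1 : T * x = 1.
  apply: (mulgI (x * T * x)). rewrite mulg1. rewrite !mulgA in E *. exact: E.
by rewrite -[T]mulg1 -Hx mulgA H1 mul1g.
Qed.

Lemma cj_inv u s : s \in S -> (cj u s)^-1 = cj u s.
Proof. move=> Hs. by rewrite /cj !invMg invgK (S_inv Hs) mulgA. Qed.

Lemma cj_sq u s : s \in S -> cj u s * cj u s = 1.
Proof. move=> Hs. rewrite -{1}(cj_inv u Hs). exact: mulVg. Qed.

Lemma pal_count a s : wS a -> s \in S ->
  odd (count_mem (prodw (pal a s)) (rs (pal a s))).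
Proof.
move=> Ha Hs. rewrite pal_prod //.
elim: a Ha => [|x a IH]; first by rewrite /= /cj prodw_nil mul1g invg1 mulg1 eqxx.
rewrite wS_cons => /andP [Hx Ha].
have HP : prodw (pal a s) = cj (prodw a) s by rewrite pal_prod.
rewrite /= -cats1 rs_cat map_cat /= count_cat count_cj /=.
have Hxi := S_inv Hx.
have E1 : cj x^-1 (cj (prodw (x :: a)) s) = cj (prodw a) s.
  by rewrite prodw_cons cjM cjK.
have E2 : cj (prodw (x :: a)) s = x * (prodw (pal a s) * x).
  by rewrite HP prodw_cons cjM /cj Hxi !mulgA.
rewrite E1 !oddD (IH Ha) E2 aux_eq1 ?S_sq // aux_eq2 ?S_sq // ?HP ?cj_inv //.
by case: (_ == x).
Qed.

Lemma in_rs_odd t a : odd (count_mem t (rs a)) -> t \in rs a.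
Proof. move=> H. apply/negPn/negP => /count_memPn E. by rewrite E in H. Qed.

Lemma refl_up u s a : s \in S -> wS a -> size a = L (prodw a) ->
  ~~ odd (count_mem (cj u s) (rs a)) -> L (prodw a) < L (cj u s * prodw a).
Proof.
move=> Hs Ha Hsa Hc.
set t := cj u s. set w := prodw a.
have [ua [Hua Hpua _]] := coxlen_spec u.
have HP := pal_wS Hua Hs. have HPp : prodw (pal ua s) = t by rewrite pal_prod // Hpua.
have HPc := pal_count Hua Hs. rewrite HPp in HPc.
have Htt : t * t = 1 by apply: cj_sq.
have [b [Hb Hpb Hsb]] := coxlen_spec (t * w).
have Hne : L (t * w) != L w.
  apply/eqP => E.
  have := @L_parity (pal ua s ++ a) b. rewrite wS_cat HP Ha Hb prodw_cat HPp Hpb.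
  move=> /(_ isT isT erefl). rewrite size_cat pal_size Hsb Hsa E /= oddD odd_double /=.
  by case: (odd _).
case: (ltngtP (L w) (L (t * w))) => // Hlt; last by rewrite Hlt eqxx in Hne.
exfalso.
have := @RL (pal ua s ++ b) a. rewrite wS_cat HP Hb Ha prodw_cat HPp Hpb mulgA Htt mul1g.
move=> /(_ isT isT erefl t). rewrite rs_cat count_cat count_cj oddD HPc.
rewrite HPp. have -> : cj t^-1 t = t by rewrite /cj invgK mulVg mul1g.
move: Hc. rewrite -/t => /negbTE -> /= /negbFE Hodd.
have := L_del Hb (in_rs_odd Hodd). rewrite Hpb mulgA Htt mul1g Hsb => H.
by have := ltn_trans H Hlt; rewrite ltnn.
Qed.

Lemma Zlem u z s : s \in S -> L (u * z) = (L u + L z)%N -> L u < L (u * s) ->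
  L z < L (s * z) -> L (u * z) < L (u * s * z).
Proof.
move=> Hs Huz Hus Hsz.
have [a [Ha Hpa Hsa]] := coxlen_spec u.
have [b [Hb Hpb Hsb]] := coxlen_spec z.
have Hab : wS (a ++ b) by rewrite wS_cat Ha Hb.
have Hpab : prodw (a ++ b) = u * z by rewrite prodw_cat Hpa Hpb.
have := @refl_up u s (a ++ b) Hs Hab. rewrite Hpab size_cat Hsa Hsb Huz => H.
have -> : u * s * z = cj u s * (u * z) by rewrite /cj !mulgA mulgKV.
apply: H => //.
rewrite rs_cat count_cat count_cj oddD Hpa cjK.
have -> : odd (count_mem (cj u s) (rs a)) = false.
  apply/negbTE/negP => /in_rs_odd Hin.
  have := L_del Ha Hin. rewrite Hpa Hsa.
  have -> : cj u s * u = u * s by rewrite /cj mulgKV.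
  by move=> H1; have := ltn_trans H1 Hus; rewrite ltnn.
have -> : odd (count_mem s (rs b)) = false.
  apply/negbTE/negP => /in_rs_odd Hin.
  have := L_del Hb Hin. rewrite Hpb Hsb.
  by move=> H1; have := ltn_trans H1 Hsz; rewrite ltnn.
by [].
Qed.

Section Longest.
Variable w0 : gT.
Hypothesis Hw0 : forall w, L w <= L w0.

Lemma Klem u : (L u + L (u^-1 * w0))%N = L w0.
Proof.
move: {2}(L u) (erefl (L u)) => n. elim: n u => [|n IH] u Hn.
  by rewrite (L_eq0 Hn) invg1 mul1g L1.
have Hu1 : u != 1 by apply/eqP => E; rewrite E L1 in Hn.
have [s Hs Hus] := desc_exists_r Hu1.
have Hn' : L (u * s) = n by rewrite Hn in Hus; case: Hus.
have := IH _ Hn'. set z := (u * s)^-1 * w0 => Hz.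
have Huz : u^-1 * w0 = s * z by rewrite /z invMg (S_inv Hs) mulgA mulgA S_sq // mul1g.
rewrite Huz.
case: (L_sw z Hs) => Hsz.
  exfalso.
  have Hlen : L ((u * s) * z) = (L (u * s) + L z)%N by rewrite /z mulKVg Hz.
  have Hus' : L (u * s) < L (u * s * s) by rewrite -mulgA S_sq // mulg1 Hn Hn'.
  have := Zlem Hs Hlen Hus'. rewrite Hsz ltnSn => /(_ isT).
  rewrite {1}/z mulKVg => H.
  by have := leq_trans H (Hw0 _); rewrite ltnn.
by rewrite Hn -Hz -Hn' Hsz addSn addnS.
Qed.

Lemma asc_exists w : L w < L w0 -> exists2 s, s \in S & L (s * w) = (L w).+1.
Proof.
move=> Hw. set v := w^-1.
have Hv : L v < L w0 by rewrite /v L_inv.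
have Kv := Klem v.
have Hne : v^-1 * w0 != 1.
  apply/eqP => E. rewrite E L1 addn0 in Kv. by rewrite Kv ltnn in Hv.
have [t Ht Et] := desc_exists Hne.
have Kvt := Klem (v * t).
have E2 : (v * t)^-1 * w0 = t * (v^-1 * w0) by rewrite invMg (S_inv Ht) mulgA.
rewrite E2 in Kvt.
exists t => //.
have -> : t * w = (v * t)^-1 by rewrite invMg (S_inv Ht) /v invgK.
rewrite L_inv -(L_inv w) -/v.
move: Kv Kvt. rewrite Et. move=> Kv Kvt. rewrite -Kvt in Kv.
by rewrite addnS -addSn in Kv; move/addIn: Kv => ->.
Qed.

End Longest.

Section Build.
Variables (Ch : Type) (delta : Ch -> Ch -> gT).
Hypothesis HB : is_building S delta.
Notation d := delta.

Lemma WD1 c e : d c e = 1 <-> c = e. Proof. by case: HB. Qed.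
Lemma dd c : d c c = 1. Proof. exact/WD1. Qed.
Lemma WD2 c e c' s : s \in S -> d c' c = s ->
  (d c' e = s * d c e \/ d c' e = d c e) /\
  (L (s * d c e) = (L (d c e)).+1 -> d c' e = s * d c e).
Proof. case: HB => _ _ _ H _. exact: H. Qed.
Lemma WD3 c e s : s \in S -> exists c', d c' c = s /\ d c' e = s * d c e.
Proof. case: HB => _ _ _ _ H. exact: H. Qed.

Lemma adj_sym c c' s : s \in S -> d c' c = s -> d c c' = s.
Proof.
move=> Hs H. have [[E|E] _] := WD2 c' Hs H; rewrite dd in E.
  by rewrite -(mulKg s (d c c')) -E mulg1 (S_inv Hs).
have /WD1 E' := esym E. subst c'. move: (S_neq1 Hs). by rewrite -H dd eqxx.
Qed.

Lemma panel_trans y x x' s : s \in S -> d y x = s -> d y x' = s -> x <> x' -> d x x' = s.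
Proof.
move=> Hs H1 H2 Hne. have H1' := adj_sym Hs H1.
have [[E|E] _] := WD2 x' Hs H1'; last by rewrite E.
rewrite H2 S_sq // in E. by move/WD1: E.
Qed.

Lemma proj_uniq y x x' e s : s \in S -> d y x = s -> d y x' = s ->
  d x e = s * d y e -> d x' e = s * d y e -> L (s * d y e) < L (d y e) -> x = x'.
Proof.
move=> Hs H1 H2 Hx Hx' Hl. apply: NNPP => Hne.
have Hxx' := panel_trans Hs H1 H2 Hne.
have Hup : L (s * d x' e) = (L (d x' e)).+1.
  rewrite Hx' mulgA S_sq // mul1g. case: (L_sw (d y e) Hs) => // E.
  by rewrite E ltnNge leqnSn in Hl.
have := (WD2 e Hs Hxx').2 Hup. rewrite Hx Hx' => /(mulgI s) E.
have E1 : 1 * d y e = s * d y e by rewrite mul1g.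
move/mulIg: E1 => E1. move: (S_neq1 Hs). by rewrite -E1 eqxx.
Qed.

Inductive gal : Ch -> seq gT -> Ch -> Prop :=
| gal_nil c : gal c [::] c
| gal_cons c c1 s a e : d c c1 = s -> gal c1 a e -> gal c (s :: a) e.

Lemma reduced_tail s a : s \in S -> wS a -> L (prodw (s :: a)) = size (s :: a) ->
  L (prodw a) = size a.
Proof.
move=> Hs Ha. rewrite prodw_cons /= => H.
apply/eqP; rewrite eqn_leq coxlen_min //=.
have := L_mul s (prodw a). rewrite H. have := L_s_le Hs. lia.
Qed.

Lemma galG c a e : gal c a e -> wS a -> L (prodw a) = size a -> d c e = prodw a.
Proof.
elim => {c a e} [c|c c1 s a e Hcc1 _ IH]; first by rewrite dd prodw_nil.
rewrite wS_cons => /andP [Hs Ha] Hl.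
have Hl' := reduced_tail Hs Ha Hl.
have IH' := IH Ha Hl'.
rewrite prodw_cons -IH'. apply: (WD2 e Hs Hcc1).2.
rewrite IH' -prodw_cons Hl Hl'. by [].
Qed.

Lemma gal_rcons x a y z s : gal x a y -> d y z = s -> gal x (rcons a s) z.
Proof.
elim => {x a y} [c|c c1 t a e H _ IH] Hz /=.
  exact: gal_cons Hz (gal_nil z).
exact: gal_cons H (IH Hz).
Qed.

Lemma gal_rev c a e : gal c a e -> wS a -> gal e (rev a) c.
Proof.
elim => {c a e} [c|c c1 s a e H _ IH]; first by constructor.
rewrite wS_cons => /andP [Hs Ha]. rewrite rev_cons.
apply: gal_rcons (IH Ha) _. exact: adj_sym.
Qed.

Lemma exists_gal n c e : L (d c e) = n ->
  exists a, [/\ gal c a e, wS a, prodw a = d c e & size a = n].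
Proof.
elim: n c => [|n IH] c Hn.
  have /WD1 E := L_eq0 Hn. subst e. exists [::]; split => //; [constructor | by rewrite dd prodw_nil].
have Hne : d c e != 1 by apply/eqP => E; rewrite E L1 in Hn.
have [s Hs Es] := desc_exists Hne.
have [c' [Hc'1 Hc'2]] := WD3 c e Hs.
have Hn' : L (d c' e) = n by rewrite Hc'2; rewrite Hn in Es; case: Es.
have [a [Ha1 Ha2 Ha3 Ha4]] := IH c' Hn'.
exists (s :: a); split.
- apply: gal_cons Ha1. exact: adj_sym.
- by rewrite wS_cons Hs.
- by rewrite prodw_cons Ha3 Hc'2 mulgA S_sq // mul1g.
- by rewrite /= Ha4.
Qed.

Lemma d_sym c e : d e c = (d c e)^-1.
Proof.
have [a [Ha1 Ha2 Ha3 Ha4]] := exists_gal (erefl (L (d c e))).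
have Hr := gal_rev Ha1 Ha2.
rewrite (galG Hr) ?wS_rev // ?prodw_rev // ?Ha3 //.
by rewrite L_inv size_rev Ha4.
Qed.

Lemma walk_back a : wS a -> forall c, exists x, d x c = prodw a.
Proof.
elim: a => [|s a IH]; first by move=> _ c; exists c; rewrite dd prodw_nil.
rewrite wS_cons => /andP [Hs Ha] c.
have [x' Hx'] := IH Ha c. have [x [_ Hx]] := WD3 x' c Hs.
by exists x; rewrite Hx Hx' prodw_cons.
Qed.

Lemma d_surj c w : exists e, d c e = w.
Proof.
have [a [Ha Hp]] := word_exists w^-1.
have [x Hx] := walk_back Ha c. exists x. by rewrite d_sym Hx Hp invgK.
Qed.

Section Apt.
Variables (w0 : gT) (c0 d0 : Ch).
Hypothesis Hw0 : forall w, L w <= L w0.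
Hypothesis Hopp : d c0 d0 = w0.

Definition coords x u := d c0 x = u /\ d x d0 = u^-1 * w0.

Lemma walk a : wS a -> forall y, exists x, gal y a x /\ d x d0 = (prodw a)^-1 * d y d0.
Proof.
elim: a => [|s a IH]; first by move=> _ y; exists y; split; [constructor | rewrite prodw_nil invg1 mul1g].
rewrite wS_cons => /andP [Hs Ha] y.
have [y1 [Hy1 Hy1d]] := WD3 y d0 Hs.
have [x [Hx1 Hx2]] := IH Ha y1.
exists x; split; first by apply: gal_cons Hx1; apply: adj_sym.
by rewrite Hx2 Hy1d prodw_cons invMg (S_inv Hs) !mulgA.
Qed.

Lemma coords_exists u : exists x, coords x u.
Proof.
have [a [Ha Hp Hs]] := coxlen_spec u.
have [x [Hx1 Hx2]] := walk Ha c0.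
exists x; split.
  by rewrite (galG Hx1 Ha) ?Hp // Hs.
by rewrite Hx2 Hp Hopp.
Qed.

Lemma step_down x u s : coords x u -> s \in S -> L u = (L (u * s)).+1 ->
  exists x1, coords x1 (u * s) /\ d x1 x = s.
Proof.
move=> [Hx1 Hx2] Hs Hl.
have [x1 [Hx1x Hx1c]] := WD3 x c0 Hs.
exists x1; split => //; split.
  by rewrite d_sym Hx1c d_sym Hx1 invMg invgK (S_inv Hs).
have Hup : L (s * d x d0) = (L (d x d0)).+1.
  have K1 := Klem Hw0 u. have K2 := Klem Hw0 (u * s).
  rewrite Hx2 mulgA -(S_inv Hs) -invMg.
  move: K1 K2. rewrite Hl => K1 K2. apply/(@addnI (L (u * s))). by rewrite K2 -K1 addSnnS.
by rewrite ((WD2 d0 Hs Hx1x).2 Hup) Hx2 invMg (S_inv Hs) mulgA.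
Qed.

Lemma coords_unique n u x x' : L u = n -> coords x u -> coords x' u -> x = x'.
Proof.
elim: n u x x' => [|n IH] u x x' Hn Hx Hx'.
  have E := L_eq0 Hn. case: Hx => [H1 _]; case: Hx' => [H2 _].
  by move/WD1: (etrans H1 E) => <-; move/WD1: (etrans H2 E) => <-.
have Hu1 : u != 1 by apply/eqP => E; rewrite E L1 in Hn.
have [s Hs Hus] := desc_exists_r Hu1.
have [x1 [Hc1 Hd1]] := step_down Hx Hs Hus.
have [x1' [Hc1' Hd1']] := step_down Hx' Hs Hus.
have Hn' : L (u * s) = n by rewrite Hn in Hus; case: Hus.
have E := IH _ _ _ Hn' Hc1 Hc1'. subst x1'.
have Hdx : d x d0 = s * d x1 d0 by rewrite Hc1.2 Hx.2 invMg (S_inv Hs) !mulgA S_sq // mul1g.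
have Hdx' : d x' d0 = s * d x1 d0 by rewrite Hc1.2 Hx'.2 invMg (S_inv Hs) !mulgA S_sq // mul1g.
apply: (proj_uniq Hs Hd1 Hd1' Hdx Hdx').
rewrite -Hdx Hx.2 Hc1.2.
have K1 := Klem Hw0 u. have K2 := Klem Hw0 (u * s).
move: K1 K2. rewrite Hus. lia.
Qed.

Definition alpha (u : gT) : Ch := proj1_sig (constructive_indefinite_description _ (coords_exists u)).
Lemma alphaP u : coords (alpha u) u.
Proof. exact: proj2_sig (constructive_indefinite_description _ (coords_exists u)). Qed.
Lemma alpha_uniq u x : coords x u -> x = alpha u.
Proof. move=> H. exact: coords_unique (erefl _) H (alphaP u). Qed.

Lemma alpha_adj u s : s \in S -> d (alpha u) (alpha (u * s)) = s.
Proof.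
move=> Hs. case: (L_ws u Hs) => Hl.
  have Hl' : L (u * s) = (L (u * s * s)).+1 by rewrite -mulgA S_sq // mulg1.
  have [x1 [Hc Hd]] := step_down (alphaP (u * s)) Hs Hl'.
  rewrite -mulgA S_sq // mulg1 in Hc.
  by rewrite -(alpha_uniq Hc).
have [x1 [Hc Hd]] := step_down (alphaP u) Hs Hl.
rewrite -(alpha_uniq Hc). exact: adj_sym.
Qed.

Lemma alpha_iso n u v : L (u^-1 * v) = n -> d (alpha u) (alpha v) = u^-1 * v.
Proof.
elim: n u => [|n IH] u Hn.
  have E := L_eq0 Hn. have Euv : v = u by rewrite -(mulKVg u v) E mulg1.
  by rewrite Euv dd mulVg.
have Hne : u^-1 * v != 1 by apply/eqP => E; rewrite E L1 in Hn.
have [s Hs Es] := desc_exists Hne.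
have E1 : (u * s)^-1 * v = s * (u^-1 * v) by rewrite invMg (S_inv Hs) mulgA.
have Hn' : L ((u * s)^-1 * v) = n by rewrite E1; rewrite Hn in Es; case: Es.
have IH' := IH _ Hn'.
have Had := alpha_adj u Hs.
have Hup : L (s * d (alpha (u * s)) (alpha v)) = (L (d (alpha (u * s)) (alpha v))).+1.
  by rewrite IH' E1 mulgA S_sq // mul1g.
by rewrite ((WD2 _ Hs Had).2 Hup) IH' E1 mulgA S_sq // mul1g.
Qed.

End Apt.

Lemma bad_uniq e e' b s y : s \in S -> d e' e = s -> d b e = s ->
  L (d e' y) < L (d e y) -> L (d b y) < L (d e y) -> e' = b.
Proof.
move=> Hs H1 H2 L1' L2'.
have side z : d z e = s -> L (d z y) < L (d e y) -> d z y = s * d e y.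
  move=> Hz Lz. have [[E|E] _] := WD2 y Hs Hz => //.
  by rewrite E ltnn in Lz.
have E1 := side _ H1 L1'. have E2 := side _ H2 L2'.
apply: (proj_uniq Hs (adj_sym Hs H1) (adj_sym Hs H2) E1 E2).
by rewrite -E1.
Qed.

Section Opp.
Variables (w0 : gT) (f : gT -> Ch).
Hypothesis Hw0 : forall w, L w <= L w0.
Hypothesis Hthick : infinitely_thick S delta.

Definition Phi e := (\sum_(w : gT) L (d e (f w)))%N.

Lemma bad_list e s : s \in S -> forall ws : seq gT, exists B : seq Ch,
  forall e', d e' e = s -> (forall i, i < size B -> nth e' B i <> e') ->
  forall w, w \in ws -> L (d e (f w)) <= L (d e' (f w)).
Proof.
move=> Hs. elim => [|w ws IH]; first by exists [::].
have [B HBl] := IH.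
case: (classic (exists b, d b e = s /\ L (d b (f w)) < L (d e (f w)))) => [[b [Hb1 Hb2]]|Hno].
  exists (b :: B) => e' He' Hav w'. rewrite inE => /orP [/eqP ->|Hw'].
    case: (leqP (L (d e (f w))) (L (d e' (f w)))) => // Hlt.
    exfalso. apply: (Hav 0%N) => //=. symmetry. exact: bad_uniq Hs He' Hb1 Hlt Hb2.
  apply: HBl => // i Hi. exact: (Hav i.+1).
exists B => e' He' Hav w'. rewrite inE => /orP [/eqP ->|Hw']; last by apply: HBl.
case: (leqP (L (d e (f w))) (L (d e' (f w)))) => // Hlt.
by exfalso; apply: Hno; exists e'.
Qed.

Lemma Phi_bound e : Phi e <= #|gT| * L w0.
Proof.
rewrite /Phi. apply: (@leq_trans (\sum_(w : gT) L w0)); first by apply: leq_sum => w _; exact: Hw0.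
by rewrite sum_nat_const.
Qed.

Lemma improve e w : L (d e (f w)) < L w0 -> exists e', Phi e < Phi e'.
Proof.
move=> Hw.
have [s Hs Es] := asc_exists Hw0 Hw.
have [B HBl] := bad_list e Hs (enum gT).
have [x [Hx1 Hx2]] := Hthick e Hs (e :: B).
have Hxe : d e x = s.
  case: Hx1 => // /WD1 E. by exfalso; apply: (Hx2 0%N).
have Hxe' := adj_sym Hs Hxe.
have Hle w' : L (d e (f w')) <= L (d x (f w')).
  apply: (HBl x Hxe') => [i Hi|]; [exact: (Hx2 i.+1) | by rewrite mem_enum].
have Hlt : L (d e (f w)) < L (d x (f w)).
  by rewrite ((WD2 (f w) Hs Hxe').2 Es) Es.
exists x. rewrite /Phi (bigD1 w) //= [X in _ < X](bigD1 w) //=.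
rewrite -addSn. apply: leq_add Hlt _. apply: leq_sum => i _. exact: Hle.
Qed.

Lemma all_opp (c0 : Ch) : exists e, forall w, L (d e (f w)) = L w0.
Proof.
suff H : forall k e, #|gT| * L w0 - Phi e <= k -> exists e', forall w, L (d e' (f w)) = L w0.
  exact: (H _ c0 (leqnn _)).
elim => [|k IH] e Hk;
  (case: (boolP [forall w, L (d e (f w)) == L w0]) => [/forallP H|/forallP Hn];
   [by exists e => w; apply/eqP; apply: H|]);
  (have [w Hw] : exists w, L (d e (f w)) < L w0 by
     apply: NNPP => Hc; apply: Hn => w; rewrite eqn_leq Hw0 /= leqNgt; apply/negP => Hl; apply: Hc; exists w);
  have [e' He'] := improve Hw; have Hb := Phi_bound e'.
  exfalso. move: Hk He' Hb. lia.
apply: (IH e'). move: Hk He' Hb. lia.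
Qed.

End Opp.

Lemma main_build : infinitely_thick S delta ->
  exists c : Ch, exists A : Ch -> Prop,
    apartment delta A /\ (forall e, A e -> opposite S delta c e).
Proof.
move=> Hthick.
have [c0] : inhabited Ch by case: HB.
case: (@arg_maxnP gT 1 predT (fun w => L w)) => // w0 _ Hmax.
have Hw0 : forall w, L w <= L w0 by move=> w; apply: Hmax.
have [d0 Hopp] := d_surj c0 w0.
have [e He] := all_opp (alpha Hopp) Hw0 Hthick c0.
exists e, (fun x => exists w, x = alpha Hopp w). split.
  exists (alpha Hopp). split => [x y|x //]. exact: (alpha_iso Hw0 Hopp (erefl (L (x^-1 * y)))).
move=> x [w ->] w'. rewrite He. exact: Hw0.
Qed.

End Build.

End Words.

Theorem lemma4p13 (gT : finGroupType) (S : {set gT}) (Ch : Type)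
    (delta : Ch -> Ch -> gT) :
  is_building S delta -> infinitely_thick S delta ->
  exists c : Ch, exists A : Ch -> Prop,
    apartment delta A /\ (forall d, A d -> opposite S delta c d).
Proof.
move=> HB Hthick.
have HS : coxeter_system S by case: HB.
exact: (main_build HS HB Hthick).
Qed.
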